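(* Let $n\ge 4$ be an integer, let $B_n$ be the boundary simplicial complex of the bipyramid over an $n$-gon (defined in the context), and let $I_{B_n}\subset k[x_0,\dots,x_{n+1}]$ be its Stanley-Reisner ideal. Then the Waldschmidt constant of $I_{B_n}$ is $$\gamma(I_{B_n})=\frac{n}{n-2}.$$
   Context: Let $k$ be a field and $n\ge 3$. The base $n$-gon $Q_n$ has vertices $1,\dots,n$ in cyclic order, so its edges are $\{i,i+1\}$ for $1\le i\le n-1$ and $\{n,1\}$. The bipyramid $B_n$ over $Q_n$ has two extra vertices $0$ (upper) and $n+1$ (lower); as a simplicial complex on $\{0,1,\dots,n+1\}$, $B_n$ is the boundary complex of the bipyramid, i.e. the complex whose facets are the triangles $\{0,i,j\}$ and $\{n+1,i,j\}$ for every edge $\{i,j\}$ of $Q_n$. The Stanley-Reisner ideal $I_{\Delta}$ of a simplicial complex $\Delta$ on $\{0,\dots,n+1\}$ is the ideal of $R=k[x_0,\dots,x_{n+1}]$ generated by the monomials $\prod_{i\in\tau}x_i$ with $\tau\notin\Delta$. For a homogeneous ideal $0\ne I\subseteq R$, the $m$-th symbolic power is $I^{(m)}=R\cap\bigcap_{P\in \mathrm{Ass}(I)} I^mR_P$, $\alpha(I)=\min\{t: I_t\neq 0\}$, and the Waldschmidt constant is $\gamma(I)=\lim_{m\to\infty}\alpha(I^{(m)})/m$. *)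

(* Defs.v *)
From Stdlib Require Reals.
From HB Require Import structures.
From mathcomp Require Import all_boot all_order all_algebra.
From mathcomp Require Import mpoly.
Set Implicit Arguments.
Unset Strict Implicit.
Unset Printing Implicit Defensive.
Import GRing.Theory.
Local Open Scope ring_scope.

Section Ideals.
Variables (k : fieldType) (N : nat).
Local Notation P := {mpoly k[N]}.

Definition is_ideal (I : P -> Prop) : Prop :=
  I 0 /\ (forall a b, I a -> I b -> I (a + b)) /\ (forall r a, I a -> I (r * a)).

Definition ideal_gen (S : P -> Prop) : P -> Prop :=
  fun f => exists s : seq (P * P),
    (forall p, p \in s -> S p.2) /\ f = \sum_(p <- s) p.1 * p.2.

Definition ideal_pow (I : P -> Prop) (m : nat) : P -> Prop :=
  ideal_gen (fun g => exists fs : m.-tuple P,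
                (forall i, I (tnth fs i)) /\ g = \prod_(i < m) tnth fs i).

Definition is_prime_ideal (Q : P -> Prop) : Prop :=
  is_ideal Q /\ ~ Q 1 /\ (forall a b, Q (a * b) -> Q a \/ Q b).

Definition ass (I : P -> Prop) (Q : P -> Prop) : Prop :=
  is_prime_ideal Q /\ exists g : P, forall f, Q f <-> I (f * g).

(* Symbolic power  I^(m) = R ∩ ⋂_{Q ∈ Ass I} I^m R_Q.  Since R is a domain,
   f/1 ∈ I^m R_Q  iff  s f ∈ I^m for some s ∉ Q. *)
Definition symb_pow (I : P -> Prop) (m : nat) : P -> Prop :=
  fun f => forall Q, ass I Q -> exists s : P, ~ Q s /\ ideal_pow I m (s * f).

Definition has_deg (J : P -> Prop) (t : nat) : Prop :=
  exists f : P, J f /\ f != 0 /\ f \is [in k[N], t.-homog].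

Definition is_alpha (J : P -> Prop) (a : nat) : Prop :=
  has_deg J a /\ forall t, has_deg J t -> (a <= t)%N.

Definition SR_ideal (face : {set 'I_N} -> Prop) : P -> Prop :=
  ideal_gen (fun g => exists tau : {set 'I_N},
                ~ face tau /\ g = \prod_(i in tau) 'X_i).

Definition waldschmidt_is (I : P -> Prop) (c : Reals.Rdefinitions.R) : Prop :=
  exists a : nat -> nat,
    (forall m, (0 < m)%N -> is_alpha (symb_pow I m) (a m)) /\
    Reals.Rseries.Un_cv
      (fun m => Reals.Rdefinitions.Rdiv (Reals.Raxioms.INR (a m)) (Reals.Raxioms.INR m)) c.
End Ideals.

Definition qn_edge (n i j : nat) : bool :=
  [|| [&& 1 <= i, i < n & j == i.+1], [&& 1 <= j, j < n & i == j.+1],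
      (i == n) && (j == 1) | (j == n) && (i == 1)]%N.

(* Faces of the bipyramid B_n on vertices 0..n+1: subsets of some facet
   {0,i,j} or {n+1,i,j} with {i,j} an edge of Q_n. *)
Definition bipyr_face (n : nat) (tau : {set 'I_(n.+2)}) : Prop :=
  exists a i j : nat, (a == 0 \/ a == n.+1)%N /\ qn_edge n i j /\
    forall v : 'I_(n.+2), v \in tau -> (v == a :> nat) || (v == i :> nat) || (v == j :> nat).

(* Main.v *)
Require Import Defs.
From Stdlib Require Reals.
From HB Require Import structures.
From mathcomp Require Import all_boot all_order all_algebra.
From mathcomp Require Import mpoly.
From mathcomp Require Import zify.
Set Implicit Arguments. Unset Strict Implicit. Unset Printing Implicit Defensive.
Import GRing.Theory.
Local Open Scope ring_scope.
From mathcomp Require Import ring.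
From Stdlib Require Import Classical.
Lemma ig_gen (k : fieldType) (N : nat) (S : {mpoly k[N]} -> Prop) x :
  S x -> ideal_gen S x.
Proof. by move=> Sx; exists [:: (1, x)]; split=> [p|]; rewrite ?inE ?big_seq1 ?mul1r // => /eqP ->. Qed.

Lemma ig_0 (k : fieldType) (N : nat) (S : {mpoly k[N]} -> Prop) : ideal_gen S 0.
Proof. by exists [::]; rewrite big_nil. Qed.

Lemma ig_add (k : fieldType) (N : nat) (S : {mpoly k[N]} -> Prop) f g :
  ideal_gen S f -> ideal_gen S g -> ideal_gen S (f + g).
Proof.
move=> [s [Hs ->]] [t [Ht ->]]; exists (s ++ t); split; last by rewrite big_cat.
by move=> p; rewrite mem_cat => /orP [/Hs|/Ht].
Qed.

Lemma ig_mul (k : fieldType) (N : nat) (S : {mpoly k[N]} -> Prop) r g :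
  ideal_gen S g -> ideal_gen S (r * g).
Proof.
move=> [s [Hs ->]]; exists [seq (r * p.1, p.2) | p <- s]; split.
  by move=> p /mapP [q /Hs Hq ->].
by rewrite big_map mulr_sumr; apply: eq_bigr => p _; rewrite mulrA.
Qed.

Lemma ig_sum (k : fieldType) (N : nat) (S : {mpoly k[N]} -> Prop) (T : eqType)
   (r : seq T) (F : T -> {mpoly k[N]}) :
  (forall x, x \in r -> ideal_gen S (F x)) -> ideal_gen S (\sum_(x <- r) F x).
Proof.
elim: r => [|x r IH] H; first by rewrite big_nil; apply: ig_0.
rewrite big_cons; apply: ig_add; first by apply: H; rewrite inE eqxx.
by apply: IH => y Hy; apply: H; rewrite inE Hy orbT.
Qed.

Lemma ig_mono (k : fieldType) (N : nat) (S T : {mpoly k[N]} -> Prop) g :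
  (forall x, S x -> ideal_gen T x) -> ideal_gen S g -> ideal_gen T g.
Proof.
move=> H [s [Hs ->]]; apply: ig_sum => p /Hs Sp; apply: ig_mul; exact: H.
Qed.

Lemma ig_prod (k : fieldType) (N : nat) (S T U : {mpoly k[N]} -> Prop) g h :
  (forall x y, S x -> T y -> U (x * y)) ->
  ideal_gen S g -> ideal_gen T h -> ideal_gen U (g * h).
Proof.
move=> H [s [Hs ->]] [t [Ht ->]]; rewrite mulr_suml; apply: ig_sum => p /Hs Sp.
rewrite -mulrA; apply: ig_mul; rewrite mulr_sumr; apply: ig_sum => q /Ht Tq.
by rewrite mulrCA; apply: ig_mul; apply: ig_gen; apply: H.
Qed.

Definition GS (k : fieldType) (N : nat) (I : {mpoly k[N]} -> Prop) (m : nat)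
  (g : {mpoly k[N]}) :=
  exists s : seq {mpoly k[N]}, size s = m /\ (forall x, x \in s -> I x) /\
     g = \prod_(x <- s) x.

Lemma GS_pow (k : fieldType) (N : nat) (I : {mpoly k[N]} -> Prop) m g :
  ideal_gen (GS I m) g <-> ideal_pow I m g.
Proof.
rewrite /ideal_pow; split; apply: ig_mono => x.
  move=> [s [sz [Hs ->]]]; apply: ig_gen.
  have sz' : size s == m by rewrite sz.
  exists (Tuple sz'); split; first by move=> i; apply: Hs; exact: mem_tnth.
  by rewrite -(big_tuple _ _ (Tuple sz') xpredT (fun x => x)).
move=> [fs [Hfs ->]]; apply: ig_gen; exists (val fs); split; first exact: size_tuple.
split; last by rewrite (big_tuple _ _ fs xpredT (fun x => x)).
by move=> y /tnthP [i ->]; apply: Hfs.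
Qed.

Lemma GS_mul (k : fieldType) (N : nat) (I : {mpoly k[N]} -> Prop) a b x y :
  GS I a x -> GS I b y -> GS I (a + b) (x * y).
Proof.
move=> [s [sz [Hs ->]]] [t [tz [Ht ->]]]; exists (s ++ t).
rewrite size_cat sz tz big_cat; split=> //; split=> // z.
by rewrite mem_cat => /orP [/Hs|/Ht].
Qed.

Lemma GS_1 (k : fieldType) (N : nat) (I : {mpoly k[N]} -> Prop) x :
  I x -> GS I 1 x.
Proof.
by move=> Ix; exists [:: x]; rewrite big_seq1; split=> //; split=> // z; rewrite inE => /eqP ->.
Qed.

Lemma GS_le (k : fieldType) (N : nat) (I : {mpoly k[N]} -> Prop) a b x :
  (b <= a)%N -> GS I a x -> ideal_gen (GS I b) x.
Proof.
move=> le [s [sz [Hs ->]]]; rewrite -(cat_take_drop b s) big_cat /= mulrC.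
apply: ig_mul; apply: ig_gen; exists (take b s); split.
  by rewrite size_take sz; case: ltngtP le.
split=> // z Hz; apply: Hs; exact: mem_take Hz.
Qed.

Lemma pow_mul (k : fieldType) (N : nat) (I : {mpoly k[N]} -> Prop) a b x y :
  ideal_pow I a x -> ideal_pow I b y -> ideal_pow I (a + b) (x * y).
Proof.
move=> /GS_pow Hx /GS_pow Hy; apply/GS_pow; apply: ig_prod Hx Hy.
by move=> u v Hu Hv; apply: GS_mul.
Qed.

Lemma pow_le (k : fieldType) (N : nat) (I : {mpoly k[N]} -> Prop) a b x :
  (b <= a)%N -> ideal_pow I a x -> ideal_pow I b x.
Proof.
move=> le /GS_pow Hx; apply/GS_pow; apply: ig_mono Hx => y; exact: GS_le.
Qed.

Lemma pow_1 (k : fieldType) (N : nat) (I : {mpoly k[N]} -> Prop) x :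
  I x -> ideal_pow I 1 x.
Proof. by move=> Ix; apply/GS_pow; apply: ig_gen; apply: GS_1. Qed.

Lemma pow_mulr (k : fieldType) (N : nat) (I : {mpoly k[N]} -> Prop) a r x :
  ideal_pow I a x -> ideal_pow I a (r * x).
Proof. exact: ig_mul. Qed.

Lemma pow_expr (k : fieldType) (N : nat) (I : {mpoly k[N]} -> Prop) a c x :
  ideal_pow I a x -> ideal_pow I (a * c) (x ^+ c).
Proof.
move=> H; elim: c => [|c IH]; first by rewrite muln0 expr0; apply/GS_pow/ig_gen; exists [::]; rewrite big_nil.
by rewrite mulnS exprS; apply: pow_mul.
Qed.
Definition wt (N : nat) (F : {set 'I_N}) (u : 'X_{1..N}) : nat :=
  (\sum_(i < N) (i \notin F) * u i)%N.

Definition hF (k : fieldType) (N : nat) (F : {set 'I_N}) (i : 'I_N) :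
  {poly {mpoly k[N]}} := ('X_i)%:P * 'X ^+ (i \notin F).

Definition Phi (k : fieldType) (N : nat) (F : {set 'I_N}) (p : {mpoly k[N]}) :
  {poly {mpoly k[N]}} := mmap (polyC \o mpolyC N (R := k)) (hF k F) p.

Lemma PhiM (k : fieldType) (N : nat) (F : {set 'I_N}) (p q : {mpoly k[N]}) :
  Phi F (p * q) = Phi F p * Phi F q.
Proof. by rewrite /Phi rmorphM. Qed.

Lemma PhiD (k : fieldType) (N : nat) (F : {set 'I_N}) (p q : {mpoly k[N]}) :
  Phi F (p + q) = Phi F p + Phi F q.
Proof. by rewrite /Phi rmorphD. Qed.

Lemma Phi1 (k : fieldType) (N : nat) (F : {set 'I_N}) :
  Phi F (1 : {mpoly k[N]}) = 1.
Proof. by rewrite /Phi rmorph1. Qed.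

Lemma PhiX (k : fieldType) (N : nat) (F : {set 'I_N}) (i : 'I_N) :
  Phi F ('X_i : {mpoly k[N]}) = hF k F i.
Proof. by rewrite /Phi mmapX mmap1U. Qed.

Lemma Phi_prod (k : fieldType) (N : nat) (F : {set 'I_N}) (A : {set 'I_N}) :
  Phi F (\prod_(i in A) ('X_i : {mpoly k[N]})) = \prod_(i in A) hF k F i.
Proof. by rewrite (big_morph (@Phi k N F) (@PhiM k N F) (@Phi1 k N F)); apply: eq_bigr => i _; rewrite PhiX. Qed.

Lemma mmap1_hF (k : fieldType) (N : nat) (F : {set 'I_N}) (u : 'X_{1..N}) :
  mmap1 (hF k F) u = ('X_[u])%:P * 'X ^+ (wt F u).
Proof.
rewrite /mmap1 /hF /wt.
under eq_bigr => i _ do rewrite exprMn -rmorphXn -exprM.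
rewrite big_split /= -rmorph_prod -prodrXr; congr (_ * _).
by rewrite mpolyXE_id.
Qed.

Lemma Phi_E (k : fieldType) (N : nat) (F : {set 'I_N}) (p : {mpoly k[N]}) :
  Phi F p = \sum_(u <- msupp p) (p@_u *: 'X_[u]) *: 'X ^+ (wt F u).
Proof.
rewrite /Phi /mmap; apply: eq_bigr => u _; rewrite mmap1_hF /= mulrA -rmorphM.
by rewrite mul_polyC mul_mpolyC.
Qed.

Lemma Phi_coef (k : fieldType) (N : nat) (F : {set 'I_N}) (p : {mpoly k[N]}) j u :
  ((Phi F p)`_j)@_u = if wt F u == j then p@_u else 0.
Proof.
rewrite Phi_E coefE /= raddf_sum /= big_mkcond /=.
under eq_bigr => v _ do rewrite mcoeffZ mcoeffX mulr_natr mulrb.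
case: (boolP (u \in msupp p)) => Hu.
  rewrite (bigD1_seq u) //= ?msupp_uniq // eqxx big1 ?addr0 //.
  by move=> v /negbTE ->; case: ifP.
rewrite big1; first by move/memN_msupp_eq0: Hu => ->; case: eqP.
move=> v _; case: (v =P u) => [->|_]; last by case: ifP.
by rewrite (memN_msupp_eq0 Hu); case: ifP.
Qed.
Lemma Phi0 (k : fieldType) (N : nat) (F : {set 'I_N}) :
  Phi F (0 : {mpoly k[N]}) = 0.
Proof. by rewrite /Phi rmorph0. Qed.

Opaque Phi.
Definition Dm (R : nzRingType) (m : nat) (p : {poly R}) :=
  forall j, (j < m)%N -> p`_j = 0.

Lemma Dm_add (R : nzRingType) m (p q : {poly R}) : Dm m p -> Dm m q -> Dm m (p + q).
Proof. by move=> Hp Hq j Hj; rewrite coefD Hp // Hq // addr0. Qed.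

Lemma Dm0 (R : nzRingType) m : Dm m (0 : {poly R}).
Proof. by move=> j _; rewrite coef0. Qed.

Lemma Dm_sum (R : nzRingType) m (T : eqType) (r : seq T) (F : T -> {poly R}) :
  (forall x, x \in r -> Dm m (F x)) -> Dm m (\sum_(x <- r) F x).
Proof.
elim: r => [|x r IH] H; first by rewrite big_nil; apply: Dm0.
rewrite big_cons; apply: Dm_add; first by apply: H; rewrite inE eqxx.
by apply: IH => y Hy; apply: H; rewrite inE Hy orbT.
Qed.

Lemma Dm_mull (R : nzRingType) m (p q : {poly R}) : Dm m p -> Dm m (q * p).
Proof.
move=> Hp j Hj; rewrite coefM big1 // => i _; rewrite Hp ?mulr0 //.
exact: leq_ltn_trans (leq_subr _ _) Hj.
Qed.

Lemma Dm_mul (R : nzRingType) a b (p q : {poly R}) :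
  Dm a p -> Dm b q -> Dm (a + b) (p * q).
Proof.
move=> Hp Hq j Hj; rewrite coefM big1 // => i _.
case: (ltnP i a) => Hi; first by rewrite Hp ?mul0r.
rewrite Hq ?mulr0 //.
have := ltn_ord i; rewrite ltnS => Hij; lia.
Qed.

Lemma Dm_cancel (R : idomainType) m (a p : {poly R}) :
  a`_0 != 0 -> Dm m (a * p) -> Dm m p.
Proof.
move=> Ha H j; elim: j {-2}j (leqnn j) => [|J IH] j Hj Hjm.
  move: Hj; rewrite leqn0 => /eqP Hj; subst j.
  have := H 0%N Hjm; rewrite coef0M => /eqP; rewrite mulf_eq0 (negbTE Ha) /=.
  by move/eqP.
have := H j Hjm; rewrite coefMr big_ord_recr /= subnn big1 ?add0r.
  by move/eqP; rewrite mulf_eq0 (negbTE Ha) /= => /eqP.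
move=> i _; rewrite (IH i) ?mulr0 //.
  by have := ltn_ord i; move=> Hi; rewrite -ltnS; apply: leq_trans Hi Hj.
by apply: ltn_trans Hjm; have := ltn_ord i.
Qed.

Lemma Dm1X (R : nzRingType) (c : R) : Dm 1 (c%:P * 'X ^+ 1).
Proof. by move=> j; rewrite ltnS leqn0 expr1 coefMX => /eqP ->. Qed.
Definition mt (N : nat) (A : {set 'I_N}) : 'X_{1..N} := (\sum_(i in A) U_(i))%MM.

Definition DC (N : nat) (fc : {set 'I_N} -> Prop) :=
  forall A B : {set 'I_N}, A \subset B -> fc B -> fc A.

Lemma prodX_mt (k : fieldType) (N : nat) (A : {set 'I_N}) :
  \prod_(i in A) ('X_i : {mpoly k[N]}) = 'X_[mt A].
Proof. by rewrite /mt mprodXE. Qed.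

Lemma mtE (N : nat) (A : {set 'I_N}) i : mt A i = (i \in A).
Proof.
rewrite /mt mnm_sumE; under eq_bigr => j _ do rewrite mnm1E.
case: (boolP (i \in A)) => Hi.
  rewrite (bigD1 i) //= eqxx big1 // => j /andP [_ /negbTE]; by rewrite eq_sym => ->.
by rewrite big1 // => j Hj; case: eqP => // E; move: Hj; rewrite E (negbTE Hi).
Qed.

Lemma mt_le (N : nat) (A : {set 'I_N}) (u : 'X_{1..N}) :
  (mt A <= u)%MM = (A \subset [set i | u i != 0%N]).
Proof.
apply/idP/idP.
  move/mnm_lepP => H; apply/subsetP => i Hi; rewrite inE.
  by have := H i; rewrite mtE Hi; case: (u i).
move/subsetP => H; apply/mnm_lepP => i; rewrite mtE.
case: (boolP (i \in A)) => // Hi; have := H i Hi; rewrite inE; by case: (u i).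
Qed.

Lemma coefMX0 (k : fieldType) (N : nat) (p : {mpoly k[N]}) m u :
  ~~ (m <= u)%MM -> (p * 'X_[m])@_u = 0.
Proof.
move=> H; apply/eqP; rewrite mcoeff_eq0; apply/negP => Hu.
move: Hu; rewrite (perm_mem (msuppMX p m)) => /mapP [v _ Ev].
by rewrite Ev lem_addr in H.
Qed.

Lemma NEC (k : fieldType) (N : nat) (fc : {set 'I_N} -> Prop) (g : {mpoly k[N]}) u :
  DC fc -> SR_ideal fc g -> u \in msupp g -> ~ fc [set i | u i != 0%N].
Proof.
move=> dc [s [Hs ->]] Hu Hf; move: Hu; rewrite mcoeff_msupp raddf_sum /=.
rewrite big_seq big1 ?eqxx // => p /Hs [tau [Ht ->]].
rewrite prodX_mt coefMX0 //; apply/negP; rewrite mt_le => Hsub.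
by apply: Ht; apply: dc Hsub Hf.
Qed.

Lemma GEN (k : fieldType) (N : nat) (fc : {set 'I_N} -> Prop) (g : {mpoly k[N]}) :
  (forall u, u \in msupp g -> exists tau, ~ fc tau /\ (mt tau <= u)%MM) ->
  SR_ideal fc g.
Proof.
move=> H; rewrite (mpolyE g); apply: ig_sum => u /H [tau [Ht Hle]].
rewrite -(submK Hle) mpolyXD scalerAl; apply: ig_mul; apply: ig_gen.
by exists tau; split=> //; rewrite prodX_mt.
Qed.

Lemma SR_D1 (k : fieldType) (N : nat) (fc : {set 'I_N} -> Prop) (F : {set 'I_N})
   (g : {mpoly k[N]}) :
  DC fc -> fc F -> SR_ideal fc g -> Dm 1 (Phi F g).
Proof.
move=> dc fF [s [Hs ->]].
rewrite (big_morph (@Phi k N F) (@PhiD k N F) (@Phi0 k N F)).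
apply: Dm_sum => p /Hs [tau [Ht ->]]; rewrite PhiM; apply: Dm_mull.
have : tau :\: F != set0.
  apply/negP; rewrite setD_eq0 => Hsub; apply: Ht; exact: dc Hsub fF.
case/set0Pn => v; rewrite inE => /andP [vF vt].
rewrite Phi_prod (bigD1 v) //= mulrC; apply: Dm_mull.
by rewrite /hF vF; apply: Dm1X.
Qed.

Lemma prod_Dm (k : fieldType) (N : nat) (I : {mpoly k[N]} -> Prop) (F : {set 'I_N})
   (t : seq {mpoly k[N]}) :
  (forall x, I x -> Dm 1 (Phi F x)) -> (forall y, y \in t -> I y) ->
  Dm (size t) (Phi F (\prod_(x <- t) x)).
Proof.
move=> H; elim: t => [|x t IH] Ht; first by rewrite big_nil => j.
rewrite /= big_cons PhiM -add1n; apply: Dm_mul.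
  by apply: H; apply: Ht; rewrite inE eqxx.
by apply: IH => // y Hy; apply: Ht; rewrite inE Hy orbT.
Qed.

Lemma pow_Dm (k : fieldType) (N : nat) (I : {mpoly k[N]} -> Prop) (F : {set 'I_N}) m g :
  (forall x, I x -> Dm 1 (Phi F x)) -> ideal_pow I m g -> Dm m (Phi F g).
Proof.
move=> H /GS_pow [s [Hs ->]].
rewrite (big_morph (@Phi k N F) (@PhiD k N F) (@Phi0 k N F)).
apply: Dm_sum => p /Hs [t [tz [Ht ->]]]; rewrite PhiM; apply: Dm_mull.
by rewrite -tz; exact: (@prod_Dm k N I F t H Ht).
Qed.

Definition QF (k : fieldType) (N : nat) (F : {set 'I_N}) (f : {mpoly k[N]}) : Prop :=
  (Phi F f)`_0 = 0.

Lemma c0D (R : nzRingType) (p q : {poly R}) : p`_0 = 0 -> q`_0 = 0 -> (p + q)`_0 = 0.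
Proof. by move=> Hp Hq; rewrite coefD Hp Hq addr0. Qed.
Lemma c0M (R : nzRingType) (p q : {poly R}) : q`_0 = 0 -> (p * q)`_0 = 0.
Proof. by move=> Hq; rewrite coef0M Hq mulr0. Qed.
Lemma c0P (R : idomainType) (p q : {poly R}) : (p * q)`_0 = 0 -> p`_0 = 0 \/ q`_0 = 0.
Proof. by rewrite coef0M => /eqP; rewrite mulf_eq0 => /orP [] /eqP; by [left|right]. Qed.
Lemma c01 (R : nzRingType) : (1 : {poly R})`_0 <> 0.
Proof. by rewrite coef1 eqxx; apply/eqP; exact: oner_neq0. Qed.

Lemma QF0 (k : fieldType) (N : nat) (F : {set 'I_N}) : QF F (0 : {mpoly k[N]}).
Proof. rewrite /QF Phi0; exact: coef0. Qed.
Lemma QFD (k : fieldType) (N : nat) (F : {set 'I_N}) (a b : {mpoly k[N]}) :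
  QF F a -> QF F b -> QF F (a + b).
Proof. rewrite /QF PhiD; exact: c0D. Qed.
Lemma QFM (k : fieldType) (N : nat) (F : {set 'I_N}) (r a : {mpoly k[N]}) :
  QF F a -> QF F (r * a).
Proof. rewrite /QF PhiM; exact: c0M. Qed.
Lemma QFP (k : fieldType) (N : nat) (F : {set 'I_N}) (a b : {mpoly k[N]}) :
  QF F (a * b) -> QF F a \/ QF F b.
Proof. rewrite /QF PhiM; exact: c0P. Qed.
Lemma QF1 (k : fieldType) (N : nat) (F : {set 'I_N}) : ~ QF F (1 : {mpoly k[N]}).
Proof. rewrite /QF Phi1; exact: c01. Qed.

Lemma QF_prime (k : fieldType) (N : nat) (F : {set 'I_N}) :
  is_prime_ideal (@QF k N F).
Proof.
split; first split.
- exact: QF0.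
- split; [exact: QFD | exact: QFM].
split; [exact: QF1 | exact: QFP].
Qed.

Lemma mpolyX_neq0 (k : fieldType) (N : nat) (m : 'X_{1..N}) : ('X_[m] : {mpoly k[N]}) != 0.
Proof. by apply/eqP => /(congr1 (mcoeff m)); rewrite mcoeffX eqxx mcoeff0 => /eqP; rewrite oner_eq0. Qed.

Lemma PhiXF0 (k : fieldType) (N : nat) (F : {set 'I_N}) :
  (Phi F ('X_[mt F] : {mpoly k[N]}))`_0 = 'X_[mt F].
Proof.
rewrite -prodX_mt Phi_prod.
have -> : \prod_(i in F) hF k F i = (\prod_(i in F) ('X_i : {mpoly k[N]}))%:P.
  rewrite rmorph_prod; apply: eq_bigr => i iF; by rewrite /hF iF expr0 mulr1.
by rewrite coefC.
Qed.

Lemma QF_ass (k : fieldType) (N : nat) (fc : {set 'I_N} -> Prop) (F : {set 'I_N}) :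
  DC fc -> fc F -> (forall v, v \notin F -> ~ fc (v |: F)) ->
  ass (SR_ideal (k := k) fc) (@QF k N F).
Proof.
move=> dc fF maxF; split; first exact: QF_prime.
exists 'X_[mt F] => f; split.
  move=> Hf; apply: GEN => u.
  rewrite (perm_mem (msuppMX f (mt F))) => /mapP [u' Hu' ->].
  have : wt F u' != 0%N.
    apply/negP => /eqP H0; move: Hu'; rewrite mcoeff_msupp.
    have := Phi_coef F f 0 u'; rewrite H0 eqxx Hf mcoeff0 => <-.
    by rewrite eqxx.
  rewrite /wt => Hw.
  have [v Hv] : exists v : 'I_N, ((v \notin F) * u' v != 0)%N.
    case: (pickP (fun v : 'I_N => ((v \notin F) * u' v != 0)%N)) => [v Hv|H]; first by exists v.
    by move: Hw; rewrite big1 ?eqxx // => i _; apply/eqP; rewrite -[_ == _]negbK; rewrite H.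
  have vF : v \notin F by move: Hv; case: (v \notin F).
  exists (v |: F); split; first exact: maxF.
  rewrite /mt big_setU1 //= -/(mt F).
  have : (U_(v) <= u')%MM by rewrite lep1mP; move: Hv; rewrite vF mul1n.
  move/mnm_lepP => Hle; apply/mnm_lepP => i; rewrite !mnmDE; have := Hle i; lia.
move=> H; have := SR_D1 dc fF H (ltn0Sn 0); rewrite PhiM.
case/c0P => [Hf|]; first exact: Hf.
rewrite PhiXF0 => /eqP; rewrite (negbTE (mpolyX_neq0 _ _)); discriminate.
Qed.

Lemma symb_low (k : fieldType) (N : nat) (fc : {set 'I_N} -> Prop) (F : {set 'I_N}) m f u :
  DC fc -> fc F -> (forall v, v \notin F -> ~ fc (v |: F)) ->
  symb_pow (SR_ideal (k := k) fc) m f -> u \in msupp f -> (m <= wt F u)%N.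
Proof.
move=> dc fF maxF Hf Hu; have [s [Hs Hsf]] := Hf _ (QF_ass k dc fF maxF).
have := pow_Dm (fun x Hx => SR_D1 dc fF Hx) Hsf; rewrite PhiM.
have Hs0 : (Phi F s)`_0 != 0 by apply/eqP; exact: Hs.
move/(Dm_cancel Hs0) => H; rewrite leqNgt; apply/negP => Hlt.
move: Hu; rewrite mcoeff_msupp.
have := Phi_coef F f (wt F u) u; rewrite eqxx (H _ Hlt) mcoeff0 => <-.
by rewrite eqxx.
Qed.
Lemma qn_edgeP (n i j : nat) : (1 <= n)%N -> qn_edge n i j ->
  [/\ (1 <= i <= n)%N, (1 <= j <= n)%N &
   (j = i.+1 \/ i = j.+1 \/ (i = n /\ j = 1%N) \/ (j = n /\ i = 1%N))].
Proof.
move=> Hn; rewrite /qn_edge => /or4P [/and3P [H1 H2 /eqP H3]|/and3P [H1 H2 /eqP H3]|/andP [/eqP H1 /eqP H2]|/andP [/eqP H1 /eqP H2]]; split; lia.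
Qed.

Lemma qn_edgeC (n i j : nat) : qn_edge n i j = qn_edge n j i.
Proof.
rewrite /qn_edge; case: (_ && _); case: (_ && _); case: (_ && _); case: (_ && _); by [].
Qed.

Definition nxt (n i : nat) : nat := if (i < n)%N then i.+1 else 1%N.
Definition prv (n i : nat) : nat := if (1 < i)%N then i.-1 else n.

Lemma nxtP (n i : nat) : (1 <= i <= n)%N -> ((i < n)%N /\ nxt n i = i.+1) \/ (i = n /\ nxt n i = 1%N).
Proof. rewrite /nxt => Hi; case: (ltnP i n) => H; [left|right]; split => //; lia. Qed.

Lemma prvP (n i : nat) : (1 <= i <= n)%N -> ((1 < i)%N /\ prv n i = i.-1) \/ (i = 1%N /\ prv n i = n).
Proof. rewrite /prv => Hi; case: (ltnP 1 i) => H; [left|right]; split => //; lia. Qed.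

Lemma edge_nxt (n i : nat) : (2 <= n)%N -> (1 <= i <= n)%N -> qn_edge n i (nxt n i).
Proof.
move=> Hn Hi; rewrite /qn_edge /nxt; case: (ltnP i n) => H.
  have -> : (1 <= i)%N by lia.
  by rewrite eqxx.
have -> : i = n by lia.
by rewrite !eqxx /= !orbT.
Qed.

Lemma edge_nbr (n i j : nat) : (3 <= n)%N -> (1 <= i <= n)%N -> qn_edge n i j ->
  j = prv n i \/ j = nxt n i.
Proof. move=> Hn Hi /qn_edgeP []; first lia; move=> H1 H2 H3; have := prvP Hi; have := nxtP Hi; lia. Qed.

Lemma nbr_noedge (n i : nat) : (4 <= n)%N -> (1 <= i <= n)%N -> ~~ qn_edge n (prv n i) (nxt n i).
Proof.
move=> Hn Hi; apply/negP => /qn_edgeP []; first lia; move=> H1 H2 H3; have := prvP Hi; have := nxtP Hi; lia.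
Qed.

Lemma nbr_facts (n i : nat) : (3 <= n)%N -> (1 <= i <= n)%N ->
  [/\ (1 <= prv n i <= n)%N, (1 <= nxt n i <= n)%N, prv n i <> i, nxt n i <> i &
      prv n i <> nxt n i].
Proof. move=> Hn Hi; have := prvP Hi; have := nxtP Hi; move=> H1 H2; split; lia. Qed.
Lemma or3_nat (x a b c : nat) : (x == a) || (x == b) || (x == c) -> x = a \/ x = b \/ x = c.
Proof. by case/orP => [/orP [] /eqP|/eqP]; auto. Qed.

Lemma DC_bip (n : nat) : DC (@bipyr_face n).
Proof.
move=> A B /subsetP sAB [a [i [j [Ha [He Hv]]]]]; exists a, i, j; split=> //; split=> //.
by move=> v /sAB /Hv.
Qed.

Definition facet (n a i : nat) : {set 'I_(n.+2)} :=
  [set v : 'I_(n.+2) | ((v : nat) == a) || ((v : nat) == i) || ((v : nat) == nxt n i)].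

Lemma facet_face (n a i : nat) : (2 <= n)%N -> (a == 0%N \/ a == n.+1) -> (1 <= i <= n)%N ->
  @bipyr_face n (facet n a i).
Proof.
move=> Hn Ha Hi; exists a, i, (nxt n i); split=> //; split; first exact: edge_nxt.
by move=> v; rewrite inE.
Qed.

Lemma val_inord (n x : nat) : (x < n.+2)%N -> ((inord x : 'I_(n.+2)) : nat) = x.
Proof. exact: inordK. Qed.

Lemma facet_max (n a i : nat) : (3 <= n)%N -> (a == 0%N \/ a == n.+1) -> (1 <= i <= n)%N ->
  forall v, v \notin facet n a i -> ~ @bipyr_face n (v |: facet n a i).
Proof.
move=> Hn Ha Hi v; rewrite inE negb_or negb_or => /andP [/andP [/eqP v1 /eqP v2] /eqP v3].
move=> [a' [j [j' [Ha' [He Hv]]]]].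
have /qn_edgeP [|Hj Hj' Hjj] := He; first lia.
have Hi' := nxtP Hi.
have Hval : forall x, (x < n.+2)%N -> ((x == a) || (x == i) || (x == nxt n i)) ->
    x = a' \/ x = j \/ x = j'.
  move=> x Hx Hxf; apply: or3_nat; rewrite -(val_inord Hx); apply: Hv.
  by rewrite !inE val_inord // Hxf orbT.
have Va : a = a' \/ a = j \/ a = j' by apply: Hval; [case: Ha => /eqP; lia | rewrite eqxx].
have Vi : i = a' \/ i = j \/ i = j' by apply: Hval; [lia | rewrite eqxx orbT].
have Vi' : nxt n i = a' \/ nxt n i = j \/ nxt n i = j' by apply: Hval; [lia | rewrite eqxx !orbT].
have Vv : (v : nat) = a' \/ (v : nat) = j \/ (v : nat) = j'.
  by apply: or3_nat; apply: Hv; rewrite !inE eqxx.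
case: Ha => /eqP Ha; case: Ha' => /eqP Ha'; lia.
Qed.

Lemma pair_nonface (n x y : nat) : (1 <= n)%N -> (1 <= x <= n)%N -> (1 <= y <= n)%N -> x <> y ->
  ~~ qn_edge n x y -> ~ @bipyr_face n [set inord x; inord y].
Proof.
move=> Hn Hx Hy Hxy Hne [a' [j [j' [Ha' [He Hv]]]]].
have /qn_edgeP [|Hj Hj' Hjj] := He; first lia.
have Vx : x = a' \/ x = j \/ x = j'.
  by apply: or3_nat; rewrite -(@val_inord n x); [apply: Hv; exact: set21 | lia].
have Vy : y = a' \/ y = j \/ y = j'.
  by apply: or3_nat; rewrite -(@val_inord n y); [apply: Hv; exact: set22 | lia].
have [[E1 E2]|[E1 E2]] : (x = j /\ y = j') \/ (x = j' /\ y = j).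
  by case: Ha' => /eqP Ha'; lia.
  by subst; rewrite He in Hne.
by subst; rewrite qn_edgeC He in Hne.
Qed.

Lemma pair_in_I (k : fieldType) (n x y : nat) : (1 <= n)%N -> (1 <= x <= n)%N -> (1 <= y <= n)%N ->
  x <> y -> ~~ qn_edge n x y ->
  SR_ideal (k := k) (@bipyr_face n) ('X_(inord x) * 'X_(inord y)).
Proof.
move=> Hn Hx Hy Hxy Hne; apply: ig_gen; exists [set inord x; inord y]; split.
  exact: pair_nonface.
have Hd : (inord x : 'I_(n.+2)) \notin [set inord y].
  rewrite inE; apply/eqP => /(congr1 (@nat_of_ord _)); rewrite !val_inord //; lia.
by rewrite big_setU1 //= big_set1.
Qed.
Lemma sum_eq1 (N : nat) (u : 'X_{1..N.+1}) (a : nat) : (a < N.+1)%N ->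
  (\sum_(v < N.+1) ((v : nat) == a) * u v)%N = u (inord a).
Proof.
move=> Ha; rewrite (bigD1 (inord a)) //= inordK // eqxx mul1n big1 ?addn0 // => v Hv.
case: eqP => // E; move: Hv; rewrite -E inord_val eqxx //.
Qed.

Lemma facet_sum (n a i : nat) (u : 'X_{1..n.+2}) : (2 <= n)%N ->
  (a == 0%N \/ a == n.+1) -> (1 <= i <= n)%N ->
  mdeg u = (wt (facet n a i) u + u (inord a) + u (inord i) + u (inord (nxt n i)))%N.
Proof.
move=> Hn Ha Hi; rewrite mdegE /wt.
have Hi' := nxtP Hi.
have Ha' : a = 0%N \/ a = n.+1 by case: Ha => /eqP; auto.
have E : forall v : 'I_(n.+2), u v = ((v \notin facet n a i) * u v + ((v : nat) == a) * u v
    + ((v : nat) == i) * u v + ((v : nat) == nxt n i) * u v)%N.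
  move=> v; rewrite inE; move: (v : nat) => x.
  case: (x =P a) => H1; case: (x =P i) => H2; case: (x =P nxt n i) => H3 /=; lia.
rewrite (eq_bigr _ (fun v _ => E v)) !big_split /= !sum_eq1 //; lia.
Qed.

Lemma sum_nxt (n : nat) (uu : nat -> nat) : (1 <= n)%N ->
  (\sum_(1 <= i < n.+1) uu (nxt n i) = \sum_(1 <= i < n.+1) uu i)%N.
Proof.
move=> Hn; rewrite big_nat_recr // big_nat_recl //.
rewrite {2}/nxt ltnn addnC; congr (_ + _)%N; apply: eq_big_nat => i /andP [H1 H2].
by rewrite /nxt H2.
Qed.

Lemma low_deg (n m : nat) (u : 'X_{1..n.+2}) : (4 <= n)%N ->
  (forall a i, (a == 0%N \/ a == n.+1) -> (1 <= i <= n)%N -> (m <= wt (facet n a i) u)%N) ->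
  (n * m <= (n - 2) * mdeg u)%N.
Proof.
move=> Hn H.
pose uu := fun j => u (inord j).
pose B := (\sum_(1 <= i < n.+1) uu i)%N.
have Ht : mdeg u = (uu 0%N + B + uu n.+1)%N.
  rewrite mdegE (eq_bigr (fun v : 'I_(n.+2) => uu (v : nat))); last first.
    by move=> v _; rewrite /uu inord_val.
  rewrite -(big_mkord xpredT uu) big_ltn // big_nat_recr //=; lia.
have Hs : forall a, (a == 0%N \/ a == n.+1) -> (n * m + n * uu a + B + B <= n * mdeg u)%N.
  move=> a Ha.
  have : (\sum_(1 <= i < n.+1) (m + uu a + uu i + uu (nxt n i)) <= \sum_(1 <= i < n.+1) mdeg u)%N.
    rewrite big_nat_cond [X in (_ <= X)%N]big_nat_cond; apply: leq_sum => i /andP [Hi _].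
    rewrite (facet_sum u _ Ha Hi) /uu; last lia.
    have := H a i Ha Hi; lia.
  rewrite !big_split /= sum_nxt; last lia.
  rewrite !sum_nat_const_nat subn1 /=; lia.
have H0 := Hs 0%N (or_introl (eqxx _)).
have H1 := Hs n.+1 (or_intror (eqxx _)).
have H4 : (4 * (uu 0%N + uu n.+1) <= n * (uu 0%N + uu n.+1))%N by apply: leq_mul.
rewrite mulnBl; nia.
Qed.
Definition base (n : nat) : {set 'I_(n.+2)} := [set v : 'I_(n.+2) | (0 < v)%N && (v <= n)%N].

Lemma mdeg_mt (N : nat) (A : {set 'I_N}) : mdeg (mt A) = #|A|.
Proof.
rewrite mdegE -sum1_card [RHS]big_mkcond; apply: eq_bigr => i _; rewrite mtE.
by case: (i \in A).
Qed.

Lemma card_base (n : nat) : (1 <= n)%N -> #|base n| = n.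
Proof.
move=> Hn.
have -> : #|base n| = (\sum_(i < n.+2) (fun j : nat => if (0 < j)%N && (j <= n)%N then 1%N else 0%N) i)%N.
  by rewrite -sum1_card [LHS]big_mkcond; apply: eq_bigr => i _; rewrite inE.
rewrite -(big_mkord (fun _ => true) (fun j : nat => if (0 < j)%N && (j <= n)%N then 1%N else 0%N)).
rewrite big_ltn // big_nat_recr //= ltnn add0n addn0.
rewrite (eq_big_nat _ _ (F2 := fun _ => 1%N)); last first.
  by move=> i /andP [H1 H2]; rewrite H1 -ltnS H2.
by rewrite sum_nat_const_nat subn1 muln1.
Qed.

Lemma not_Q_pow (k : fieldType) (N : nat) (Q : {mpoly k[N]} -> Prop) x e :
  is_prime_ideal Q -> ~ Q x -> ~ Q (x ^+ e).
Proof.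
move=> [_ [Q1 Qp]] Hx; elim: e => [|e IH]; first by rewrite expr0.
by rewrite exprS => /Qp [].
Qed.

Lemma prod_pow (k : fieldType) (N : nat) (I : {mpoly k[N]} -> Prop) (A : {set 'I_N})
   (G : 'I_N -> {mpoly k[N]}) :
  (forall v, v \in A -> I (G v)) -> ideal_pow I #|A| (\prod_(v in A) G v).
Proof.
move=> H; apply/GS_pow; apply: ig_gen; exists [seq G v | v <- enum A].
rewrite size_map -cardE big_map big_enum; split=> //; split=> //.
by move=> x /mapP [v Hv ->]; apply: H; rewrite -mem_enum.
Qed.

Lemma big_decomp (R : Type) (idx : R) (op : Monoid.com_law idx) (N : nat)
   (B : {set 'I_N}) (a b c : 'I_N) (F : 'I_N -> R) :
  a \in B -> b \in B -> c \in B -> a != b -> a != c -> b != c ->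
  \big[op/idx]_(v in B) F v =
  op (F a) (op (F b) (op (F c) (\big[op/idx]_(v in [set v in B | (v != a) && (v != b) && (v != c)]) F v))).
Proof.
move=> Ha Hb Hc ab ac bc.
rewrite (bigD1 a) //; congr (op _ _); rewrite (bigD1 b) /=; last by rewrite Hb eq_sym ab.
congr (op _ _); rewrite (bigD1 c) /=; last by rewrite Hc eq_sym ac eq_sym bc.
congr (op _ _); apply: eq_bigl => v; by rewrite inE !andbA.
Qed.

Lemma miss_vertex (k : fieldType) (n : nat) (Q : {mpoly k[n.+2]} -> Prop) :
  (1 <= n)%N -> ass (SR_ideal (@bipyr_face n)) Q ->
  exists i0 : 'I_(n.+2), (0 < i0 <= n)%N /\ ~ Q 'X_i0.
Proof.
move=> Hn [[Qi [Q1 Qp]] [g Hg]].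
apply: NNPP => Hno.
have Hall : forall i0 : 'I_(n.+2), (0 < i0 <= n)%N -> Q 'X_i0.
  move=> i0 Hi0; apply: NNPP => HQ; apply: Hno; by exists i0.
have nSg : ~ SR_ideal (@bipyr_face n) g by move=> Hs; apply: Q1; apply/Hg; rewrite mul1r.
have [u [Hu Hf]] : exists u, u \in msupp g /\ @bipyr_face n [set i | u i != 0%N].
  apply: NNPP => Hne; apply: nSg; apply: GEN => u Hu.
  exists [set i | u i != 0%N]; split; last by rewrite mt_le.
  by move=> Hf; apply: Hne; exists u.
have [a' [j [j' [Ha' [He Hv]]]]] := Hf.
have /qn_edgeP [//|Hj _ _] := He.
have Hjn : (j < n.+2)%N by lia.
have HQj := Hall (inord j) (ltac:(rewrite val_inord //; lia)).
have HSR := (proj1 (Hg _)) HQj.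
apply: (@NEC k _ _ _ (U_(inord j) + u)%MM (@DC_bip n) HSR).
  rewrite mcoeff_msupp mulrC mcoeffMX -mcoeff_msupp //.
exists a', j, j'; split=> //; split=> //.
move=> v; rewrite inE mnmDE mnm1E.
case: (boolP (inord j == v)) => [/eqP <-|_] /=.
  by rewrite val_inord // eqxx orbT.
by rewrite add0n => Hu'; apply: Hv; rewrite inE.
Qed.
Lemma ident (R : comNzRingType) (N : nat) (J : {set 'I_N}) (x a b : R) (G : 'I_N -> R) (c : nat) :
  x ^+ (#|J| * c) * (x * (a * (b * \prod_(v in J) G v))) ^+ c =
  x ^+ c * ((\prod_(v in J) (x * G v)) * (a * b)) ^+ c.
Proof.
rewrite big_split /= prodr_const !exprMn -exprM.
move: (x ^+ (#|J| * c)) (x ^+ c) (a ^+ c) (b ^+ c) ((\prod_(v in J) G v) ^+ c) => X1 X2 A B P.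
ring.
Qed.

Definition cc (n m : nat) : nat := (m %/ (n - 2)).+1.

Definition fm (k : fieldType) (n m : nat) : {mpoly k[n.+2]} :=
  (\prod_(v in base n) 'X_v) ^+ cc n m.

Lemma fm_symb (k : fieldType) (n m : nat) : (4 <= n)%N ->
  symb_pow (SR_ideal (k := k) (@bipyr_face n)) m (fm k n m).
Proof.
move=> Hn Q HQ.
have H1n : (1 <= n)%N by lia.
have H3n : (3 <= n)%N by lia.
have H2n : (0 < n - 2)%N by lia.
have HQp : is_prime_ideal Q by case: HQ.
have [i0 [Hi0 nQ]] := miss_vertex H1n HQ.
pose i := (i0 : nat).
have Hi : (1 <= i <= n)%N by [].
have [Hp Hq pi qi pq] := nbr_facts H3n Hi.
pose p := prv n i; pose q := nxt n i.
have Hpn : (p < n.+2)%N by lia.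
have Hqn : (q < n.+2)%N by lia.
pose vp : 'I_(n.+2) := inord p; pose vq : 'I_(n.+2) := inord q.
have vpE : (vp : nat) = p by rewrite val_inord.
have vqE : (vq : nat) = q by rewrite val_inord.
have Bi0 : i0 \in base n by rewrite inE.
have Bp : vp \in base n by rewrite inE vpE; apply/andP; lia.
have Bq : vq \in base n by rewrite inE vqE; apply/andP; lia.
have ne1 : i0 != vp by apply/eqP => /(congr1 (@nat_of_ord _)); rewrite vpE; lia.
have ne2 : i0 != vq by apply/eqP => /(congr1 (@nat_of_ord _)); rewrite vqE; lia.
have ne3 : vp != vq by apply/eqP => /(congr1 (@nat_of_ord _)); rewrite vpE vqE; lia.
pose J := [set v in base n | (v != i0) && (v != vp) && (v != vq)].
have cardJ : (#|J| + 3 = n)%N.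
  have E : (\sum_(v in base n) 1 = 1 + (1 + (1 + \sum_(v in J) 1)))%N.
    exact: (big_decomp _ (fun _ => 1%N) Bi0 Bp Bq ne1 ne2 ne3).
  move: E; rewrite !sum1_card card_base //; lia.
pose c := cc n m.
pose R := (\prod_(v in J) ('X_i0 * 'X_v)) * ('X_vp * 'X_vq) : {mpoly k[n.+2]}.
exists ('X_i0 ^+ (#|J| * c)); split; first exact: not_Q_pow.
have -> : 'X_i0 ^+ (#|J| * c) * fm k n m = 'X_i0 ^+ c * R ^+ c.
  rewrite /fm -/c (big_decomp _ _ Bi0 Bp Bq ne1 ne2 ne3) -/J /R; exact: ident.
apply: pow_mulr; apply: (@pow_le _ _ _ ((#|J| + 1) * c)).
  have := @ltn_ceil m (n - 2) H2n; rewrite /c /cc.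
  have -> : (#|J| + 1 = n - 2)%N by lia.
  rewrite mulnC; lia.
apply: pow_expr; apply: pow_mul.
  apply: prod_pow => v; rewrite inE => /andP [Bv /andP [/andP [v1 v2] v3]].
  move: Bv; rewrite inE => Bv.
  have -> : ('X_i0 : {mpoly k[n.+2]}) = 'X_(inord i) by rewrite /i inord_val.
  rewrite -[v]inord_val; apply: pair_in_I => //.
    by move=> E; move/eqP: v1; apply; apply: val_inj; rewrite /= -E.
  apply/negP => /(edge_nbr H3n Hi) [E|E].
    by move/eqP: v2; apply; apply: val_inj; rewrite /= vpE; exact: E.
  by move/eqP: v3; apply; apply: val_inj; rewrite /= vqE; exact: E.
apply: pow_1; rewrite /vp /vq; apply: pair_in_I => //.
exact: nbr_noedge.
Qed.
Lemma fm_deg (k : fieldType) (n m : nat) : (4 <= n)%N ->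
  has_deg (symb_pow (SR_ideal (k := k) (@bipyr_face n)) m) (n * cc n m).
Proof.
move=> Hn; exists (fm k n m); split; first exact: fm_symb.
have -> : fm k n m = 'X_[mt (base n) *+ cc n m] by rewrite /fm prodX_mt mpolyXn.
split; first exact: mpolyX_neq0.
rewrite dhomogX; have E := mdegMn (mt (base n)) (cc n m); rewrite mdeg_mt card_base in E; last lia.
apply/eqP; exact: E.
Qed.

Lemma deg_low (k : fieldType) (n m t : nat) : (4 <= n)%N ->
  has_deg (symb_pow (SR_ideal (k := k) (@bipyr_face n)) m) t -> (n * m <= (n - 2) * t)%N.
Proof.
move=> Hn [f [Hf [nz Hh]]].
have Hu := mlead_supp nz.
have <- : mdeg (mlead f) = t by move/dhomogP: Hh; apply.
apply: low_deg => // a i Ha Hi.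
apply: (symb_low (@DC_bip n) _ _ Hf Hu).
  apply: facet_face => //; lia.
apply: facet_max => //; lia.
Qed.
From Stdlib Require Import Reals Lra.
From Stdlib Require Import ClassicalEpsilon.
Local Close Scope ring_scope.
Local Open Scope R_scope.

Lemma conv_real (a : nat -> nat) (n d : nat) : (0 < d)%nat -> (0 < n)%nat ->
  (forall m, (0 < m)%nat -> exists q, [/\ (n * m <= d * a m)%nat, (a m <= n * (q + 1))%nat & (q * d <= m)%nat]) ->
  Un_cv (fun m => INR (a m) / INR m) (INR n / INR d).
Proof.
move=> Hd Hn H eps He.
have Hn' : 0 < INR n by apply: lt_0_INR; apply/ltP.
have Hd' : 0 < INR d by apply: lt_0_INR; apply/ltP.
have [|N [HN HN0]] := archimed_cor1 (eps / INR n).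
  by apply: Rdiv_lt_0_compat; lra.
exists N => m Hm.
have Hm0 : (0 < m)%nat by apply/ltP; lia.
have [q [H1 H2 H3]] := H m Hm0.
move/leP: H1 => /le_INR H1; move/leP: H2 => /le_INR H2; move/leP: H3 => /le_INR H3.
rewrite !mult_INR in H1; rewrite mult_INR plus_INR /= in H2; rewrite mult_INR in H3.
have HM : 0 < INR m by apply: lt_0_INR; lia.
have HNM : INR N <= INR m by apply: le_INR; lia.
have HN' : 0 < INR N by apply: lt_0_INR; lia.
rewrite /R_dist.
have E : INR (a m) / INR m - INR n / INR d =
    (INR (a m) * INR d - INR n * INR m) / (INR m * INR d) by field; lra.
rewrite E.
have Hpos : 0 <= (INR (a m) * INR d - INR n * INR m) / (INR m * INR d).
  rewrite /Rdiv; apply: Rmult_le_pos; first nra.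
  apply: Rlt_le; apply: Rinv_0_lt_compat; nra.
rewrite (Rabs_pos_eq _ Hpos).
have Hub : (INR (a m) * INR d - INR n * INR m) / (INR m * INR d) <= INR n / INR m.
  apply: (Rmult_le_reg_r (INR m * INR d)); first nra.
  have -> : (INR (a m) * INR d - INR n * INR m) / (INR m * INR d) * (INR m * INR d)
      = INR (a m) * INR d - INR n * INR m by field; lra.
  have -> : INR n / INR m * (INR m * INR d) = INR n * INR d by field; lra.
  nra.
have Hfin : INR n / INR m < eps.
  have HNinv : / INR N * INR n < eps.
    apply: (Rmult_lt_reg_r (/ INR n)); first by apply: Rinv_0_lt_compat; lra.
    have -> : / INR N * INR n * / INR n = / INR N by field; lra.
    have -> : eps * / INR n = eps / INR n by [].
    exact: HN.
  apply: (Rle_lt_trans _ (/ INR N * INR n)); last exact: HNinv.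
  rewrite /Rdiv Rmult_comm; apply: Rmult_le_compat_r; first lra.
  apply: Rinv_le_contravar; lra.
lra.
Qed.

Delimit Scope nat_scope with N.
Local Close Scope R_scope.
Unset Implicit Arguments.

Theorem theorem1p1 (k : fieldType) (n : nat) :
  (4 <= n)%N ->
  waldschmidt_is (SR_ideal (k := k) (@bipyr_face n))
    (Reals.Rdefinitions.Rdiv (Reals.Raxioms.INR n) (Reals.Raxioms.INR (n - 2))).
Proof.
move=> Hn.
pose pb := fun m t => if excluded_middle_informative
   (has_deg (symb_pow (SR_ideal (k := k) (@bipyr_face n)) m) t) then true else false.
have pbP : forall m t, pb m t -> has_deg (symb_pow (SR_ideal (k := k) (@bipyr_face n)) m) t.
  by move=> m t; rewrite /pb; case: excluded_middle_informative.
have pbI : forall m t, has_deg (symb_pow (SR_ideal (k := k) (@bipyr_face n)) m) t -> pb m t.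
  by move=> m t Ht; rewrite /pb; case: excluded_middle_informative.
have exP : forall m, exists t, pb m t.
  by move=> m; exists (n * cc n m)%N; apply: pbI; apply: fm_deg.
exists (fun m => ex_minn (exP m)); split.
  move=> m _; case: ex_minnP => t Ht Hmin; split; first exact: pbP.
  by move=> t' Ht'; apply: Hmin; apply: pbI.
apply: conv_real; [lia|lia|] => m Hm.
exists (m %/ (n - 2))%N; case: ex_minnP => t Ht Hmin; split.
- exact: (deg_low Hn (pbP _ _ Ht)).
- have := Hmin _ (pbI _ _ (fm_deg k m Hn)); rewrite /cc addn1 //.
- exact: leq_trunc_div.
Qed.
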